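(* Let $N,n,m,p$ be positive integers, $A\in\mathbb{R}^{n\times n}$, $B\in\mathbb{R}^{n\times p}$, $C\in\mathbb{R}^{m\times n}$, $H\in\mathbb{R}^{n\times m}$, $W=[w_{ij}]\in\mathbb{R}^{N\times N}$ with $w_{ii}=0$ for all $i$, $\Delta=\mathrm{diag}(\delta_1,\dots,\delta_N)$ with $\delta_i\in\{0,1\}$, and $h>0$. Put $\mathcal{B}(h)=\int_0^h e^{A\tau}d\tau\,B$, $\mathcal{H}(h)=\int_0^h e^{A\tau}d\tau\,HC$, $\Phi_s=I_N\otimes e^{Ah}+W\otimes\mathcal{H}(h)$, $\Psi_s=\Delta\otimes\mathcal{B}(h)$. Assume $W$ is diagonalizable, let $v_1,\dots,v_N\in\mathbb{C}^{1\times N}$ be linearly independent row vectors with $v_kW=\lambda_kv_k$, and let $E_k=e^{Ah}+\lambda_k\mathcal{H}(h)$, $k=1,\dots,N$. Assume moreover that every $E_k$ is nonsingular. Then the networked sampled-data system $X(k+1)=\Phi_sX(k)+\Psi_sU(k)$ is controllable if and only if the following three conditions all hold: (1) the pair $(W,\Delta)$ is controllable; (2) the pair $(E_k,\mathcal{B}(h))$ is controllable for every $k=1,\dots,N$; (3) whenever $\theta\in\mathbb{C}$ is a common eigenvalue of $E_{k_1},\dots,E_{k_q}$ for distinct indices $k_1,\dots,k_q\in\{1,\dots,N\}$ with $1<q\le N$, then $(v_{k_1}\otimes\xi_{k_1}+\dots+v_{k_q}\otimes\xi_{k_q})(\Delta\otimes\mathcal{B}(h))\neq0$ for all $\xi_j\in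 M(\theta\,|\,E_j)$, $j=k_1,\dots,k_q$, with $(\xi_{k_1},\dots,\xi_{k_q})\neq0$.
   Context: The networked sampled-data system is the discrete-time system $X(k+1)=\Phi_sX(k)+\Psi_sU(k)$, $X(k)\in\mathbb{R}^{Nn}$, $U(k)\in\mathbb{R}^{Np}$; it is called controllable if every initial state can be steered to the origin in finitely many steps. For $F\in\mathbb{C}^{q\times q}$, $G\in\mathbb{C}^{q\times s}$, the pair $(F,G)$ is called controllable if $\mathrm{rank}[sI_q-F,\ G]=q$ for every $s\in\mathbb{C}$. $M(\theta\,|\,E)=\{\xi:\ \xi E=\theta\xi\}$ is the left eigenspace of the square matrix $E$ for $\theta$. $\otimes$ is the Kronecker product. *)

(* Defs.v *)
From HB Require Import structures.
From mathcomp Require Import all_boot all_order all_algebra.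
From mathcomp Require Import complex mxtens.
From mathcomp Require Import all_classical all_reals all_analysis.
Set Implicit Arguments. Unset Strict Implicit. Unset Printing Implicit Defensive.
Import Order.TTheory GRing.Theory Num.Theory.
Import numFieldNormedType.Exports.
Local Open Scope ring_scope.

Definition expm (R : realType) (n : nat) (A : 'M[R]_n) (t : R) : 'M[R]_n :=
  \matrix_(i, j) (limn (series (fun k : nat =>
     (((t ^+ k / (k`!)%:R) *: A ^+ k) i j : R)))).

Definition int_expm (R : realType) (n : nat) (A : 'M[R]_n) (h : R) : 'M[R]_n :=
  \matrix_(i, j) Rintegral (@lebesgue_measure R) `[0, h]%classic
                   (fun tau => expm A tau i j).

Definition toC (R : rcfType) (x : R) : R[i] := Complex x 0.
Definition mxC (R : rcfType) (m n : nat) (M : 'M[R]_(m, n)) : 'M[R[i]]_(m, n) :=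
  map_mx (@toC R) M.

Fixpoint traj (R : ringType) (d r : nat) (Phi : 'M[R]_d) (Psi : 'M[R]_(d, r))
  (x0 : 'cV[R]_d) (u : nat -> 'cV[R]_r) (k : nat) : 'cV[R]_d :=
  match k with
  | 0 => x0
  | k'.+1 => Phi *m traj Phi Psi x0 u k' + Psi *m u k'
  end.

Definition sys_controllable (R : ringType) (d r : nat) (Phi : 'M[R]_d)
  (Psi : 'M[R]_(d, r)) : Prop :=
  forall x0 : 'cV[R]_d, exists (K : nat) (u : nat -> 'cV[R]_r),
    traj Phi Psi x0 u K = 0.

Definition pair_controllable (R : rcfType) (q s : nat) (F : 'M[R[i]]_q)
  (G : 'M[R[i]]_(q, s)) : Prop :=
  forall z : R[i], \rank (row_mx (z%:M - F) G) = q.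

Definition in_left_eigenspace (F : fieldType) (q : nat) (theta : F)
  (E : 'M[F]_q) (xi : 'rV[F]_q) : Prop := xi *m E = theta *: xi.

(* Main.v *)
Require Import Defs.
From mathcomp Require Import zify.
From HB Require Import structures.
From mathcomp Require Import all_boot all_order all_algebra.
From mathcomp Require Import complex mxtens.
From mathcomp Require Import all_classical all_reals all_analysis.
Import Order.TTheory GRing.Theory Num.Theory.
Local Open Scope ring_scope.
Section Tens.
Variable F : comPzRingType.
Lemma tensmxDr m n p q (A : 'M[F]_(m,n)) (B C : 'M[F]_(p,q)) :
  A *t (B + C) = A *t B + A *t C.
Proof. by apply/matrixP=> i j; rewrite !mxE mulrDr. Qed.
Lemma tensmxZr m n p q (A : 'M[F]_(m,n)) c (B : 'M[F]_(p,q)) :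
  A *t (c *: B) = c *: (A *t B).
Proof. by apply/matrixP=> i j; rewrite !mxE mulrCA. Qed.
Lemma tensmxZl m n p q (A : 'M[F]_(m,n)) c (B : 'M[F]_(p,q)) :
  (c *: A) *t B = c *: (A *t B).
Proof. by apply/matrixP=> i j; rewrite !mxE mulrA. Qed.
Lemma tensmxNr m n p q (A : 'M[F]_(m,n)) (B : 'M[F]_(p,q)) :
  A *t (- B) = - (A *t B).
Proof. by apply/matrixP=> i j; rewrite !mxE mulrN. Qed.
Lemma idx00 : mxtens_index (ord0 : 'I_1, ord0 : 'I_1) = 0.
Proof. by apply: val_inj. Qed.
End Tens.

Lemma tens_neq0 (F : fieldType) m n (a : 'rV[F]_m) (b : 'rV[F]_n) :
  a != 0 -> b != 0 -> a *t b != 0.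
Proof.
move=> Ha Hb; apply/negP=> /eqP H.
have Hab : forall i j, a 0 i * b 0 j = 0.
  move=> i j; move/matrixP: H => /(_ (mxtens_index (ord0, ord0)) (mxtens_index (i, j))).
  by rewrite tensmxE mxE.
case/negP: Ha; apply/eqP/rowP => i; rewrite mxE; apply/eqP.
apply: contraNT Hb => ai; apply/eqP/rowP=> j; rewrite mxE.
by have /eqP := Hab i j; rewrite mulf_eq0 (negbTE ai) /= => /eqP.
Qed.

Lemma pc_iff (R : rcfType) q s (F : 'M[R[i]]_q) (G : 'M[R[i]]_(q, s)) :
  pair_controllable F G <->
  (forall z (x : 'rV_q), x *m F = z *: x -> x *m G = 0 -> x = 0).
Proof.
split.
- move=> Hpc z x HxF HxG; have := Hpc z.
  set M := row_mx _ _ => HM.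
  have xM : x *m M = 0.
    by rewrite mul_mx_row mulmxBr HxF mul_mx_scalar subrr HxG row_mx0.
  have : (x <= kermx M)%MS by apply/sub_kermxP.
  move/mxrankS; rewrite mxrank_ker HM subnn leqn0 mxrank_eq0.
  by move/eqP.
- move=> H z; set M := row_mx _ _.
  have K0 : kermx M = 0.
    apply/row_matrixP => i; rewrite row0.
    have : row i (kermx M) *m M = 0 by apply/sub_kermxP; exact: row_sub.
    rewrite mul_mx_row => /eqP; rewrite row_mx_eq0 => /andP[/eqP h1 /eqP h2].
    apply: (H z) h2.
    by move: h1; rewrite mulmxBr mul_mx_scalar => /eqP; rewrite subr_eq0 => /eqP <-.
  have := mxrank_ker M; rewrite K0 mxrank0 => /esym/eqP; rewrite subn_eq0 => h.
  by apply/eqP; rewrite eqn_leq rank_leq_row h.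
Qed.

Lemma exists_eig (F : closedFieldType) k (M : 'M[F]_k) : (0 < k)%N ->
  exists theta, exists2 x : 'rV_k, x *m M = theta *: x & x != 0.
Proof.
move=> k0; have : size (char_poly M) != 1%N by rewrite size_char_poly; case: k k0 M.
case/closed_rootP => th; rewrite -eigenvalue_root_char => /eigenvalueP[x Hx nx].
by exists th, x.
Qed.
Lemma CH_pow (F : comNzRingType) d (A : 'M[F]_d.+1) :
  exists c : nat -> F, A ^+ d.+1 = \sum_(j < d.+1) c j *: A ^+ j.
Proof.
exists (fun j => - (char_poly A)`_j).
have := Cayley_Hamilton A.
rewrite -{1}[char_poly A]coefK poly_def size_char_poly rmorph_sum big_ord_recr /=.
have -> : (char_poly A)`_d.+1 = 1.
  by have /monicP := char_poly_monic A; rewrite lead_coefE size_char_poly.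
rewrite scale1r rmorphXn /= horner_mx_X => /eqP; rewrite addrC addr_eq0 => /eqP ->.
rewrite -sumrN; apply: eq_bigr => j _.
by rewrite linearZ /= rmorphXn /= horner_mx_X scaleNr.
Qed.

Section Kalman.
Variables (F : closedFieldType) (d r : nat) (Phi : 'M[F]_d) (Psi : 'M[F]_(d, r)).
Let Kt := (\sum_(i < d) <<(Phi ^+ i *m Psi)^T>>)%MS.
Let Z := kermx Kt^T.

Lemma inZ k (Y : 'M[F]_(k, d)) :
  (Y <= Z)%MS <-> (forall i : 'I_d, Y *m (Phi ^+ i *m Psi) = 0).
Proof.
split.
- move/sub_kermxP => HY i.
  have : ((Phi ^+ i *m Psi)^T <= Kt)%MS by apply: (sumsmx_sup i) => //; rewrite genmxE.
  case/submxP => D HD.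
  by rewrite -[Phi ^+ i *m Psi]trmxK HD trmx_mul mulmxA HY mul0mx.
- move=> H; apply/sub_kermxP.
  suff H0 : Kt *m Y^T = 0 by rewrite -[Y]trmxK -trmx_mul H0 trmx0.
  apply/sub_kermxP; apply/sumsmx_subP => i _; rewrite genmxE; apply/sub_kermxP.
  by rewrite -trmx_mul H trmx0.
Qed.

Hypothesis PBH : forall theta (eta : 'rV[F]_d),
  eta *m Phi = theta *: eta -> eta *m Psi = 0 -> eta = 0.

Lemma Kt_full : row_full Kt.
Proof.
apply: contraT => nfull.
have rZ : (0 < \rank Z)%N.
  rewrite /Z mxrank_ker mxrank_tr subn_gt0.
  by rewrite ltn_neqAle rank_leq_col andbT.
move: Kt Z rZ (inZ) nfull => Kt' Z' rZ inZ' _.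
case: d Phi Psi Kt' Z' rZ inZ' PBH => [|d'] Phi' Psi' Kt' Z' rZ inZ' PBH'.
  by move: rZ; have := rank_leq_row Z'; case: (\rank Z').
set Zb := row_base Z'.
have ZbZ : (Zb <= Z')%MS by rewrite eq_row_base.
have Zb0 : forall i : 'I_d'.+1, Zb *m (Phi' ^+ i *m Psi') = 0.
  by apply/inZ'.
have ZbPhi : (Zb *m Phi' <= Zb)%MS.
  rewrite eq_row_base; apply/inZ' => i.
  rewrite -mulmxA (mulmxA Phi').
  have -> : Phi' *m Phi' ^+ i = Phi' ^+ i.+1 by rewrite exprS mulmxE.
  case: (ltnP i.+1 d'.+1) => hi.
    by have := Zb0 (Ordinal hi).
  have -> : i.+1 = d'.+1 by apply/eqP; rewrite eqn_leq hi ltn_ord.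
  have [c ->] := @CH_pow _ _ Phi'.
  rewrite mulmx_suml mulmx_sumr big1 // => j _.
  by rewrite -scalemxAl -scalemxAr Zb0 scaler0.
set M := Zb *m Phi' *m pinvmx Zb.
have HM : M *m Zb = Zb *m Phi' by rewrite /M mulmxKpV.
have [th [x Hx nx]] := @exists_eig _ _ M rZ.
have eta0 : x *m Zb = 0.
  apply: (PBH' th).
    by rewrite -mulmxA -HM mulmxA Hx scalemxAl.
  by have := Zb0 ord0; rewrite expr0 mul1mx => H; rewrite -mulmxA H mulmx0.
by move: nx; rewrite -(mulmx_free_eq0 _ (row_base_free Z')) eta0 eqxx.
Qed.

Lemma kalman (y : 'cV[F]_d) :
  exists w : nat -> 'cV[F]_r, y = \sum_(i < d) Phi ^+ i *m Psi *m w i.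
Proof.
have : (y^T <= Kt)%MS by apply: submx_full; exact: Kt_full.
case/sub_sumsmxP => u_ Hu.
set B := fun i : 'I_d => (Phi ^+ i *m Psi)^T.
have HB : forall i, u_ i *m <<B i>>%MS = (u_ i *m <<B i>>%MS *m pinvmx (B i)) *m B i.
  by move=> i; rewrite -2!mulmxA (mulmxA <<B i>>%MS) mulmxKpV // genmxE.
have [u' {}Hu] : exists u' : 'I_d -> 'rV_r, y^T = \sum_i u' i *m (Phi ^+ i *m Psi)^T.
  by exists (fun i => u_ i *m <<B i>>%MS *m pinvmx (B i)); rewrite Hu; apply: eq_bigr => i _; exact: HB.
clear HB B.
case: d Phi Psi y u' Hu {u_} PBH => [|d'] Phi' Psi' y u' Hu _.
  by exists (fun _ => 0); rewrite big_ord0; apply/matrixP => -[].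
exists (fun k => if (k < d'.+1)%N then (u' (inord k))^T else 0).
rewrite -[y]trmxK Hu linear_sum /=; apply: eq_bigr => i _.
by rewrite ltn_ord inord_val trmx_mul trmxK.
Qed.
End Kalman.
Section Real.
Variable R : rcfType.

Lemma mxCE m n (M : 'M[R]_(m, n)) : mxC M = map_mx (real_complex R) M.
Proof. by []. Qed.

Lemma mulmxE' (F : pzRingType) d (A B : 'M[F]_d) : A * B = A *m B.
Proof. by []. Qed.

Lemma mxC_pow d (A : 'M[R]_d) k : mxC (A ^+ k) = (mxC A) ^+ k.
Proof.
elim: k => [|k IH]; first by rewrite !expr0 mxCE map_mx1.
by rewrite !exprS [A * _]mulmxE' [mxC A * _]mulmxE' mxCE map_mxM -!mxCE IH.
Qed.

Lemma ReC a b c (M : 'M[R]_(a, b)) (w : 'M[R[i]]_(b, c)) :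
  map_mx (@complex.Re R) (mxC M *m w) = M *m map_mx (@complex.Re R) w.
Proof.
apply/matrixP=> i j; rewrite !mxE raddf_sum; apply: eq_bigr => k _.
rewrite !mxE /toC; case: (w k j) => x y /=.
by rewrite mul0r subr0.
Qed.

Lemma ReS a b k (A : 'I_k -> 'M[R[i]]_(a, b)) :
  map_mx (@complex.Re R) (\sum_(i < k) A i) = \sum_(i < k) map_mx (@complex.Re R) (A i).
Proof.
apply/matrixP=> i j; rewrite mxE !summxE raddf_sum; apply: eq_bigr => l _.
by rewrite mxE.
Qed.

Lemma ReCK a b (M : 'M[R]_(a, b)) : map_mx (@complex.Re R) (mxC M) = M.
Proof. by apply/matrixP=> i j; rewrite !mxE. Qed.

Lemma traj_formula d r (Phi : 'M[R]_d) (Psi : 'M[R]_(d, r)) x0 u K :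
  traj Phi Psi x0 u K =
  Phi ^+ K *m x0 + \sum_(i < K) Phi ^+ i *m Psi *m u (K - i.+1)%N.
Proof.
elim: K => [|K IH] /=; first by rewrite expr0 mul1mx big_ord0 addr0.
rewrite IH mulmxDr mulmxA -mulmxE' -exprS mulmx_sumr big_ord_recl /=.
rewrite expr0 mul1mx subn1 /= -addrA [Psi *m u K + _]addrC.
congr (_ + (_ + _)); apply: eq_bigr => i _; rewrite !mulmxA -mulmxE' -exprS.
have -> : bump 0 i = i.+1 by rewrite /bump leq0n add1n.
by rewrite subSS.
Qed.

Lemma pbh_ctrl d r (Phi : 'M[R]_d) (Psi : 'M[R]_(d, r)) :
  (forall eta : 'rV[R[i]]_d, eta *m mxC Phi = 0 -> eta = 0) ->
  sys_controllable Phi Psi <->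
  (forall theta (eta : 'rV[R[i]]_d),
     eta *m mxC Phi = theta *: eta -> eta *m mxC Psi = 0 -> eta = 0).
Proof.
move=> nsing; split.
- move=> Hc theta eta He HP.
  have [th0'|th0] := eqVneq theta 0.
    by apply: nsing; rewrite He th0' scale0r.
  have Htr : forall x0 u k,
      eta *m mxC (traj Phi Psi x0 u k) = theta ^+ k *: (eta *m mxC x0).
    move=> x0 u; elim=> [|k IH] /=; first by rewrite expr0 scale1r.
    rewrite !mxCE map_mxD !map_mxM -!mxCE mulmxDr !mulmxA He HP mul0mx addr0.
    by rewrite -scalemxAl IH scalerA exprS.
  have Hx : forall x0 : 'cV[R]_d, eta *m mxC x0 = 0.
    move=> x0; have [K [u HK]] := Hc x0.
    have := Htr x0 u K; rewrite HK mxCE map_mx0 mulmx0 => /esym/eqP.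
    by rewrite scaler_eq0 expf_eq0 (negbTE th0) andbF => /eqP.
  apply/rowP => j; rewrite mxE.
  have := Hx (delta_mx j 0); rewrite mxCE map_delta_mx -colE => /matrixP/(_ 0 0).
  by rewrite !mxE.
- move=> H x0.
  have [w Hw] := @kalman (R[i]) _ _ _ _ H (mxC (- (Phi ^+ d *m x0))).
  exists d, (fun j => map_mx (@complex.Re R) (w (d - j.+1)%N)).
  rewrite traj_formula.
  have := congr1 (map_mx (@complex.Re R)) Hw; rewrite ReCK ReS => Hy.
  apply/eqP; rewrite addrC addr_eq0 Hy; apply/eqP.
  apply: eq_bigr => i _.
  rewrite -mxC_pow -ReC mxCE map_mxM -!mxCE.
  have -> : (d - (d - i.+1).+1)%N = i by have := ltn_ord i; lia.
  by [].
Qed.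
End Real.
Section Decomp.
Variables (R : rcfType) (N n : nat) (v : 'I_N -> 'rV[R[i]]_N).
Let V := \matrix_(k < N) v k.

Lemma tens_sum_entry (xi : 'I_N -> 'rV[R[i]]_n) a j :
  (\sum_k v k *t xi k) 0 (mxtens_index (a, j)) =
  (V^T *m \matrix_(k, l) xi k 0 l) a j.
Proof.
rewrite summxE !mxE; apply: eq_bigr => k _.
rewrite -{1}idx00 tensmxE !mxE mulrC; congr (_ * _); congr (xi k _ _); exact: val_inj.
Qed.

Hypothesis hV : row_free V.

Lemma tens_sum_eq0 (xi : 'I_N -> 'rV[R[i]]_n) :
  \sum_k v k *t xi k = 0 -> forall k, xi k = 0.
Proof.
move=> H k.
have uV : V^T \in unitmx by rewrite unitmx_tr -row_free_unit.
have H1 : V^T *m \matrix_(k, l) xi k 0 l = 0.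
  apply/matrixP => a j; rewrite -tens_sum_entry H !mxE //.
have H2 : \matrix_(k, l) xi k 0 l = 0 :> 'M[R[i]]_(N, n).
  by rewrite -[LHS](mulKmx uV) H1 mulmx0.
apply/rowP => l; move/matrixP: H2 => /(_ k l); rewrite !mxE => ->.
by [].
Qed.

Lemma tens_decomp (eta : 'rV[R[i]]_(N * n)) :
  exists xi : 'I_N -> 'rV[R[i]]_n, eta = \sum_k v k *t xi k.
Proof.
have uV : V^T \in unitmx by rewrite unitmx_tr -row_free_unit.
set Z := \matrix_(a < N, j < n) eta 0 (mxtens_index (a, j)).
set Xi := invmx V^T *m Z.
exists (fun k => row k Xi).
apply/rowP => c; case: (mxtens_indexP c) => a j.
rewrite tens_sum_entry.
have -> : \matrix_(k, l) (row k Xi) 0 l = Xi by apply/matrixP=> k l; rewrite !mxE.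
by rewrite /Xi mulKVmx // /Z mxE.
Qed.
End Decomp.
Theorem corollary1 (R : realType) (N n m p : nat)
  (hN : (0 < N)%N) (hn : (0 < n)%N) (hm : (0 < m)%N) (hp : (0 < p)%N)
  (A : 'M[R]_n) (B : 'M[R]_(n, p)) (C : 'M[R]_(m, n)) (H : 'M[R]_(n, m))
  (W : 'M[R]_N) (delta : 'I_N -> R) (h : R)
  (hW : forall i : 'I_N, W i i = 0)
  (hdelta : forall i : 'I_N, delta i = 0 \/ delta i = 1)
  (hh : 0 < h)
  (v : 'I_N -> 'rV[R[i]]_N) (lambda : 'I_N -> R[i])
  (hv_indep : row_free (\matrix_(k < N) v k))
  (hv_eig : forall k : 'I_N, v k *m mxC W = lambda k *: v k)
  (hE_unit : forall k : 'I_N,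
      mxC (expm A h) + lambda k *: mxC (int_expm A h *m (H *m C)) \in unitmx) :
  let Bh := int_expm A h *m B in
  let Hh := int_expm A h *m (H *m C) in
  let Delta := diag_mx (\row_i delta i) in
  let Phi_s := (1%:M : 'M[R]_N) *t expm A h + W *t Hh in
  let Psi_s := Delta *t Bh in
  let E := fun k : 'I_N => mxC (expm A h) + lambda k *: mxC Hh in
  sys_controllable Phi_s Psi_s <->
  [/\ pair_controllable (mxC W) (mxC Delta),
      (forall k : 'I_N, pair_controllable (E k) (mxC Bh)) &
      (forall (theta : R[i]) (S : {set 'I_N}),
         (1 < #|S|)%N ->
         (forall k, k \in S -> eigenvalue (E k) theta) ->
         forall xi : 'I_N -> 'rV[R[i]]_n,
           (forall k, k \in S -> in_left_eigenspace theta (E k) (xi k)) ->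
           (exists2 k, k \in S & xi k != 0) ->
           (\sum_(k in S) v k *t xi k) *m mxC Psi_s != 0)].
Proof.
move=> Bh Hh Delta Phi_s Psi_s E.
set X := mxC (expm A h). set Y := mxC Hh. set Wc := mxC W.
have PhiC : mxC Phi_s = 1%:M *t X + Wc *t Y.
  by rewrite /Phi_s mxCE map_mxD !map_mxT map_mx1.
have PsiC : mxC Psi_s = mxC Delta *t mxC Bh by rewrite mxCE map_mxT.
have L1 : forall z (x : 'rV_N) (xi : 'rV_n), x *m Wc = z *: x ->
    (x *t xi) *m mxC Phi_s = x *t (xi *m (X + z *: Y)).
  move=> z x xi Hx; rewrite PhiC mulmxDr !tensmx_mul mulmx1 Hx tensmxZl.
  by rewrite -tensmxZr -tensmxDr mulmxDr scalemxAr.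
have Lv : forall (k : 'I_N) (xi : 'rV[R[i]]_n), (v k *t xi) *m mxC Phi_s = v k *t (xi *m E k).
  by move=> k xi; exact: (L1 _ _ xi (hv_eig k)).
have LS : forall xi : 'I_N -> 'rV_n,
    (\sum_k v k *t xi k) *m mxC Phi_s = \sum_k v k *t (xi k *m E k).
  by move=> xi; rewrite mulmx_suml; apply: eq_bigr => k _; exact: Lv.
have LPsi : forall (x : 'rV_N) (xi : 'rV_n),
    (x *t xi) *m mxC Psi_s = (x *m mxC Delta) *t (xi *m mxC Bh).
  by move=> x xi; rewrite PsiC tensmx_mul.
have vnz : forall k, v k != 0.
  move=> k; apply/negP => /eqP vk0.
  have : (delta_mx 0 k : 'rV[R[i]]_N) *m (\matrix_(k < N) v k)
         = 0 *m (\matrix_(k < N) v k) by rewrite -rowE rowK vk0 mul0mx.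
  move/(row_free_inj hv_indep)/matrixP/(_ 0 k); rewrite !mxE !eqxx /= => /eqP.
  by rewrite oner_eq0.
have nsing : forall eta : 'rV[R[i]]_(N * n), eta *m mxC Phi_s = 0 -> eta = 0.
  move=> eta; have [xi ->] := @tens_decomp _ _ _ _ hv_indep eta; rewrite LS => H0.
  have Hk := @tens_sum_eq0 _ _ _ _ hv_indep _ H0.
  apply: big1 => k _.
  have -> : xi k = 0.
    by rewrite -[xi k](mulmxK (hE_unit k)) Hk mul0mx.
  by rewrite tensmx0.
rewrite (@pbh_ctrl _ _ _ _ _ nsing).
split.
- move=> P; split.
  + apply/pc_iff => z x Hx HxD.
    have [mu [xi Hxi xinz]] := @exists_eig _ _ (X + z *: Y) hn.
    have Ht : x *t xi = 0.
      apply: (P mu); first by rewrite (L1 _ _ _ Hx) Hxi tensmxZr.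
      by rewrite LPsi HxD tens0mx.
    apply/eqP/negPn/negP => xnz.
    by move: (@tens_neq0 _ _ _ _ _ xnz xinz); rewrite Ht eqxx.
  + move=> k; apply/pc_iff => z x Hx HxB.
    have Ht : v k *t x = 0.
      apply: (P z); first by rewrite Lv Hx tensmxZr.
      by rewrite LPsi HxB tensmx0.
    apply/eqP/negPn/negP => xnz.
    by move: (@tens_neq0 _ _ _ _ _ (vnz k) xnz); rewrite Ht eqxx.
  + move=> theta S _ _ xi Hxi [k0 k0S xk0]; apply/negP => /eqP H0.
    set xi' := fun k => if k \in S then xi k else 0.
    have Hs : \sum_(k in S) v k *t xi k = \sum_k v k *t xi' k.
      rewrite big_mkcond; apply: eq_bigr => k _; rewrite /xi'.
      by case: (k \in S) => //; rewrite tensmx0.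
    rewrite Hs in H0.
    have H1 : \sum_k v k *t xi' k = 0.
      apply: (P theta) => //.
      rewrite LS scaler_sumr; apply: eq_bigr => k _; rewrite /xi'.
      case: ifP => kS; first by rewrite Hxi // tensmxZr.
      by rewrite mul0mx !tensmx0 scaler0.
    have := @tens_sum_eq0 _ _ _ _ hv_indep _ H1 k0; rewrite /xi' k0S => xk.
    by move: xk0; rewrite xk eqxx.
- case=> /pc_iff c1 c2 c3 theta eta He HPs.
  have [xi Heta] := @tens_decomp _ _ _ _ hv_indep eta.
  move: He HPs; rewrite Heta => He HPs.
  have Hxi : forall k, xi k *m E k = theta *: xi k.
    have : \sum_k v k *t (xi k *m E k - theta *: xi k) = 0.
      rewrite (eq_bigr (fun k => v k *t (xi k *m E k) - v k *t (theta *: xi k)));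
        last by move=> k _; rewrite tensmxDr tensmxNr.
      rewrite sumrB -LS He scaler_sumr; apply/eqP; rewrite subr_eq0; apply/eqP.
      by apply: eq_bigr => k _; rewrite tensmxZr.
    move/(@tens_sum_eq0 _ _ _ _ hv_indep _) => Hz k; apply/eqP; rewrite -subr_eq0; apply/eqP.
    exact: Hz.
  set S := [set k | xi k != 0].
  have [S0 | Sn0] := eqVneq S finset.set0.
    apply: big1 => k _.
    have : k \notin S by rewrite S0 inE.
    by rewrite inE negbK => /eqP ->; rewrite tensmx0.
  have Hsum : \sum_k v k *t xi k = \sum_(k in S) v k *t xi k.
    rewrite [RHS]big_mkcond; apply: eq_bigr => k _; rewrite inE.
    by have [->|//] := eqVneq (xi k) 0; rewrite tensmx0.
  exfalso.
  have : (0 < #|S|)%N by rewrite card_gt0.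
  rewrite leq_eqVlt => /orP[/eqP S1 | S2].
  + have /cards1P[k0 Sk0] : #|S| == 1%N by rewrite -S1.
    have xk0 : xi k0 != 0.
      have : k0 \in S by rewrite Sk0 set11.
      by rewrite inE.
    move: HPs; rewrite Hsum Sk0 big_set1 LPsi => HPs.
    have n1 : v k0 *m mxC Delta != 0.
      apply/eqP => hh0; move: (vnz k0); rewrite (c1 _ _ (hv_eig k0) hh0) eqxx.
      by [].
    have n2 : xi k0 *m mxC Bh != 0.
      apply/eqP => hh0; move/pc_iff: (c2 k0) => c2k.
      by move: xk0; rewrite (c2k theta _ (Hxi k0) hh0) eqxx.
    by move: (@tens_neq0 _ _ _ _ _ n1 n2); rewrite HPs eqxx.
  + have Heig : forall k, k \in S -> eigenvalue (E k) theta.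
      move=> k; rewrite inE => xk; apply/eigenvalueP; exists (xi k); [exact (Hxi k) | exact xk].
    have Hl : forall k, k \in S -> in_left_eigenspace theta (E k) (xi k).
      by move=> k _; exact (Hxi k).
    have Hex : exists2 k, k \in S & xi k != 0.
      by have /set0Pn [k kS] := Sn0; exists k => //; move: kS; rewrite inE.
    by move: (c3 theta S S2 Heig xi Hl Hex); rewrite -Hsum HPs eqxx.
Qed.
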